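(* Let $m\in\mathbb{N}$, $0<\sigma_1<\sigma_2<\dots<\sigma_m$, and $b_1,\dots,b_m>0$ with $\sum_{i=1}^m b_i<1$. Let $M$ be the symmetric $m\times m$ matrix with $M_{ii}=(1-b_i)/\sigma_i$ and $M_{ij}=-\sqrt{b_ib_j/(\sigma_i\sigma_j)}$ for $i\neq j$, and let $\mu_1<\dots<\mu_m$ be the roots of $$1+\sum_{j=1}^m\frac{\sigma_jb_j}{(1-\sum_{i=1}^mb_i)(\sigma_j-\lambda)}=0.$$ Then the eigenvalues of $M$ are exactly $1/\mu_1>1/\mu_2>\dots>1/\mu_m$ (all simple); equivalently, the squared semi-axes $h_1^2\le\dots\le h_m^2$ of the ellipsoid $\{p\in\mathbb{R}^m: p^{T}Mp=1\}$ satisfy $h_k^2=\mu_k$ for $k=1,\dots,m$.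
   Context: Under the stated hypotheses the displayed equation in $\lambda$ has exactly $m$ roots, all real, satisfying $\sigma_j<\mu_j<\sigma_{j+1}$ ($j<m$) and $\sigma_m<\mu_m$. *)

(* Defs.v *)
From HB Require Import structures.
From mathcomp Require Import all_boot all_order all_algebra.
Set Implicit Arguments. Unset Strict Implicit. Unset Printing Implicit Defensive.
Import Order.TTheory GRing.Theory Num.Theory.
Local Open Scope ring_scope.

Definition Mmat (R : rcfType) (m : nat) (sigma b : 'I_m -> R) : 'M[R]_m :=
  \matrix_(i < m, j < m)
    if i == j then (1 - b i) / sigma i
    else - Num.sqrt (b i * b j / (sigma i * sigma j)).

Definition secular (R : rcfType) (m : nat) (sigma b : 'I_m -> R) (l : R) : R :=
  1 + \sum_(j < m) (sigma j * b j) / ((1 - \sum_(i < m) b i) * (sigma j - l)).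

(* l is a root of the equation: l is in the domain (no pole) and the LHS vanishes. *)
Definition is_secular_root (R : rcfType) (m : nat) (sigma b : 'I_m -> R) (l : R) : Prop :=
  (forall j, l != sigma j) /\ secular sigma b l = 0.

(* Main.v *)
Require Import Defs.
From HB Require Import structures.
From mathcomp Require Import all_boot all_order all_algebra.
From mathcomp Require Import ring lra.
Import Order.TTheory GRing.Theory Num.Theory.
Local Open Scope ring_scope.

Lemma key_eig (R : rcfType) (m : nat) (sigma b : 'I_m -> R) (l : R) (k : 'I_m)
  (hsig_pos : forall i, 0 < sigma i)
  (hb_pos : forall i, 0 < b i)
  (hb_sum : \sum_(i < m) b i < 1)
  (hr : is_secular_root sigma b l) :
  l != 0 /\ eigenvalue (Mmat sigma b) l^-1.
Proof.
case: hr => hne hsec.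
set B := \sum_(i < m) b i in hb_sum hsec.
have hB : 1 - B != 0 by rewrite subr_eq0 gt_eqF.
have hBp : 0 < 1 - B by rewrite subr_gt0.
have hl : l != 0.
  apply/negP => /eqP l0; move: hsec; rewrite /secular -/B l0.
  apply/eqP; rewrite gt_eqF // ltr_pwDl // sumr_ge0 // => i _.
  rewrite subr0 ltW // divr_gt0 // ?mulr_gt0 //.
split=> //.
pose u i := Num.sqrt (b i / sigma i).
have hu2 i : u i ^+ 2 = b i / sigma i by rewrite sqr_sqrtr // ltW // divr_gt0.
have hup i : 0 < u i by rewrite sqrtr_gt0 divr_gt0.
have hsn i : sigma i != 0 by rewrite gt_eqF.
have hsl i : sigma i - l != 0 by rewrite subr_eq0 eq_sym.
have hd i : (sigma i)^-1 - l^-1 != 0.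
  rewrite subr_eq0; apply/negP => /eqP/invr_inj e.
  by move: (hne i); rewrite e eqxx.
pose x := \row_i (u i / ((sigma i)^-1 - l^-1)).
have hM i j : Mmat sigma b i j = (i == j)%:R / sigma i - u i * u j.
  rewrite /Mmat mxE; case: eqP => [->|_].
    by rewrite -expr2 hu2 /=; field; rewrite hsn.
  rewrite /= mulr0n mul0r sub0r /u -sqrtrM ?ltW ?divr_gt0 //.
  by congr (- Num.sqrt _); rewrite invfM; ring.
have hS : \sum_i sigma i * b i / (sigma i - l) = - (1 - B).
  have h : 1 + (1-B)^-1 * \sum_i sigma i * b i / (sigma i - l) = 0.
    apply: (etrans _ hsec); rewrite /secular -/B mulr_sumr; congr (_ + _); apply: eq_bigr => i _.
    by field; rewrite hB hsl.
  have := congr1 (fun t => (1-B)*t) h.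
  rewrite /= mulr0 mulrDr mulr1 mulrA mulfV // mul1r addrC => /eqP.
  by rewrite addr_eq0 => /eqP.
have hxu : \sum_i x 0 i * u i = 1.
  transitivity (\sum_i (b i - sigma i * b i / (sigma i - l))).
    apply: eq_bigr => i _; rewrite mxE.
    rewrite mulrAC -expr2 hu2.
    by field; rewrite hsl hl hsn mulN1r subr_eq0 hne.
  by rewrite big_split /= sumrN -/B hS opprK addrC subrK.
apply/eigenvalueP; exists x.
  apply/rowP => j; rewrite !mxE.
  under eq_bigr => i _ do rewrite hM mulrBr.
  rewrite sumrB.
  rewrite (bigD1 j) //= big1 ?addr0; last first.
    by move=> i /negbTE ->; rewrite mul0r mulr0.
  under eq_bigr => i _ do rewrite mulrA.
  rewrite -mulr_suml hxu mul1r eqxx mul1r.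
  rewrite !mxE.
  by field; rewrite hl hsn mulN1r subr_eq0 hne.
apply/negP => /eqP/(congr1 (fun v : 'rV_m => v 0 k)); rewrite !mxE => /eqP.
by rewrite mulf_eq0 invr_eq0 (negbTE (hd k)) orbF gt_eqF.
Qed.

Theorem lemma2p9 (R : rcfType) (m : nat) (sigma b mu : 'I_m -> R)
  (hsig_pos : forall i, 0 < sigma i)
  (hsig_inc : forall i j : 'I_m, (i < j)%N -> sigma i < sigma j)
  (hb_pos : forall i, 0 < b i)
  (hb_sum : \sum_(i < m) b i < 1)
  (hmu_inc : forall i j : 'I_m, (i < j)%N -> mu i < mu j)
  (hmu_roots : forall l : R, is_secular_root sigma b l <-> exists k, l = mu k) :
  (forall a : R, eigenvalue (Mmat sigma b) a <-> exists k, a = (mu k)^-1) /\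
  char_poly (Mmat sigma b) = \prod_(k < m) ('X - ((mu k)^-1)%:P).
Proof.
have hk k : mu k != 0 /\ eigenvalue (Mmat sigma b) (mu k)^-1.
  by apply: key_eig => //; apply/hmu_roots; exists k.
pose rs := [seq (mu k)^-1 | k <- enum 'I_m].
have hP : char_poly (Mmat sigma b) = \prod_(z <- rs) ('X - z%:P).
  rewrite {1}(@all_roots_prod_XsubC _ (char_poly (Mmat sigma b)) rs).
  - by rewrite (monicP (char_poly_monic _)) scale1r.
  - by rewrite size_char_poly size_map size_enum_ord.
  - apply/allP => z /mapP [k _ ->].
    by have := (hk k).2; rewrite eigenvalue_root_char.
  rewrite uniq_rootsE map_inj_uniq ?enum_uniq // => i j /invr_inj e.
  apply/eqP; case: (ltngtP i j) => // h.
  - by move: (hmu_inc _ _ h); rewrite e ltxx.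
  - by move: (hmu_inc _ _ h); rewrite e ltxx.
  - by apply/eqP/val_inj.
split.
  move=> a; rewrite eigenvalue_root_char hP root_prod_XsubC; split.
    by move/mapP => [k _ ->]; exists k.
  by case=> k ->; apply: map_f; rewrite mem_enum.
by rewrite hP big_map big_enum.
Qed.
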